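(* Let $\Gamma$ be a discrete group, $V$ a left $\Gamma$-set and $\mathcal G=\Gamma\ltimes V$ the transformation groupoid. Let $E$ be a left $\Gamma$-set with a $1$-cocycle $\varphi\colon\Gamma\times E\to\Gamma$, $(h,e)\mapsto h|_e$ (i.e. $(gh)|_e=g|_{h\cdot e}\cdot h|_e$ for all $g,h\in\Gamma$, $e\in E$), and maps $r,s\colon E\to V$ with $s(g\cdot e)=(g|_e)\cdot s(e)$ and $r(g\cdot e)=g\cdot r(e)$ for all $g\in\Gamma$, $e\in E$. Then $X=E\times\Gamma$ with the discrete topology, anchors $r(e,g)=r(e)$, $s(e,g)=g^{-1}\cdot s(e)$, right $\Gamma$-action $(e,g)\cdot g_2=(e,gg_2)$ and left $\Gamma$-action $h\cdot(e,g)=(h\cdot e,h|_e\cdot g)$ is a groupoid correspondence $\mathcal G\leftarrow\mathcal G$. Every groupoid correspondence $\mathcal G\leftarrow\mathcal G$ is isomorphic to one of this form, where $(E,r,s)$ is unique up to isomorphism and $\varphi$ is unique up to the action of the group of maps $\psi\colon E\to\Gamma$ given by $\varphi^\psi(h,e)=\psi(h\cdot e)^{-1}\varphi(h,e)\psi(e)$. The correspondence $X$ is proper if and only if $r\colon E\to V$ is finite-to-one, and tight if and only if $r\colon E\to V$ is bijective.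
   Context: $V$ carries the discrete topology; $\Gamma\ltimes V$ has arrows $(g,v)$ with $s(g,v)=v$, $r(g,v)=gv$. An action of $\Gamma\ltimes V$ on a space is the same as a $\Gamma$-action together with a $\Gamma$-equivariant anchor map to $V$ (for right actions: $s(x\gamma)=\gamma^{-1}s(x)$). A groupoid correspondence $X\colon\mathcal H\leftarrow\mathcal G$ between étale groupoids is a space with commuting continuous left $\mathcal H$-action (anchor $r$) and right $\mathcal G$-action (anchor $s$), such that $s$ is a local homeomorphism and the right action is free and proper (the map $(x,g)\mapsto(xg,x)$ is injective and proper). Isomorphism of correspondences means a biequivariant homeomorphism. $X$ is proper if $r_*\colon X/\mathcal G\to\mathcal H^0$ is proper, and tight if $r_*$ is a homeomorphism. *)

(* Defs.v *)
From HB Require Import structures.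
From mathcomp Require Import all_boot all_order all_algebra generic_quotient.
From mathcomp Require Import all_classical all_reals topology.

Set Implicit Arguments.
Unset Strict Implicit.
Unset Printing Implicit Defensive.

Local Open Scope classical_set_scope.

Record DGroup := {
  gcar :> Type;
  gmul : gcar -> gcar -> gcar;
  gone : gcar;
  ginv : gcar -> gcar;
  gmulA : forall x y z, gmul x (gmul y z) = gmul (gmul x y) z;
  gmul1 : forall x, gmul gone x = x;
  gmulV : forall x, gmul (ginv x) x = gone }.

Arguments gmul {d}.
Arguments gone {d}.
Arguments ginv {d}.

Notation disc T := (discrete_topology {classic T}).

Section Correspondences.
Variable G : DGroup.

Local Notation "x * y" := (gmul x y).
Local Notation "x ^-1" := (ginv x).

Definition is_left_action (T : Type) (act : G -> T -> T) : Prop :=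
  (forall x, act gone x = x) /\
  (forall g h x, act (g * h) x = act g (act h x)).

Definition is_right_action (T : Type) (act : T -> G -> T) : Prop :=
  (forall x, act x gone = x) /\
  (forall x g h, act x (g * h) = act (act x g) h).

Definition is_cocycle (E : Type) (actE : G -> E -> E) (phi : G -> E -> G) :=
  forall g h e, phi (g * h) e = phi g (actE h e) * phi h e.

Definition local_homeo (X Y : topologicalType) (f : X -> Y) : Prop :=
  forall x, exists U : set X,
    [/\ open U, U x, open (f @` U),
        (forall a b, U a -> U b -> f a = f b -> a = b) &
        {within U, continuous f} /\
        (forall W, open W -> W `<=` U -> open (f @` W))].

Definition proper_map (X Y : topologicalType) (f : X -> Y) : Prop :=
  forall K : set Y, compact K -> compact (f @^-1` K).

Definition homeomorphism (X Y : topologicalType) (f : X -> Y) : Prop :=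
  continuous f /\ exists g : Y -> X, [/\ cancel f g, cancel g f & continuous g].

Variables (V : Type) (actV : G -> V -> V).

(* X is a groupoid correspondence (G ⋉ V) <- (G ⋉ V), where an action of
   G ⋉ V is a G-action with a G-equivariant anchor map to the discrete V. *)
Definition is_correspondence (X : topologicalType)
    (lact : G -> X -> X) (ract : X -> G -> X) (r s : X -> disc V) : Prop :=
  [/\
      is_left_action lact /\ (forall h x, r (lact h x) = actV h (r x)),
      is_right_action ract /\ (forall x g, s (ract x g) = actV g^-1 (s x)),
      [/\ forall h x g, lact h (ract x g) = ract (lact h x) g,
          forall x g, r (ract x g) = r x &
          forall h x, s (lact h x) = s x],
      [/\ continuous r, continuous s,
          forall h, continuous (lact h) &
          forall g, continuous (fun x => ract x g)] &
      local_homeo s /\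
      (* the right action is free and proper *)
      injective (fun p : (X * disc G)%type => (ract p.1 p.2, p.1)) /\
      proper_map (fun p : (X * disc G)%type => (ract p.1 p.2, p.1))].

Definition corr_iso (X Y : topologicalType)
    (lX : G -> X -> X) (rX : X -> G -> X) (rrX sX : X -> disc V)
    (lY : G -> Y -> Y) (rY : Y -> G -> Y) (rrY sY : Y -> disc V) : Prop :=
  exists F : X -> Y,
    [/\ homeomorphism F,
        forall h x, F (lX h x) = lY h (F x),
        forall x g, F (rX x g) = rY (F x) g,
        forall x, rrY (F x) = rrX x &
        forall x, sY (F x) = sX x].

Section OrbitSpace.
Variables (X : topologicalType) (ract : X -> G -> X).

Definition orbit_rel : rel X :=
  fun x y => `[< range (ract x) = range (ract y) >].

Lemma orbit_rel_refl : reflexive orbit_rel.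
Proof. by move=> x; apply/asboolP. Qed.

Lemma orbit_rel_sym : symmetric orbit_rel.
Proof.
by move=> x y; apply/asboolP/asboolP => ->.
Qed.

Lemma orbit_rel_trans : transitive orbit_rel.
Proof. by move=> y x z /asboolP Hxy /asboolP Hyz; apply/asboolP; rewrite Hxy. Qed.

Definition orbit_equiv : equiv_rel X :=
  EquivRel orbit_rel orbit_rel_refl orbit_rel_sym orbit_rel_trans.

Definition orbit_space := quotient_topology {eq_quot orbit_equiv}%qT.

Definition anchor_star (r : X -> disc V) : orbit_space -> disc V :=
  fun q => r (repr q).

End OrbitSpace.
Arguments anchor_star {X} ract r.

Definition proper_corr (X : topologicalType) (ract : X -> G -> X)
    (r : X -> disc V) : Prop :=
  proper_map (anchor_star ract r).

Definition tight_corr (X : topologicalType) (ract : X -> G -> X)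
    (r : X -> disc V) : Prop :=
  homeomorphism (anchor_star ract r).

Definition corr_data (E : Type) (actE : G -> E -> E) (phi : G -> E -> G)
    (rE sE : E -> V) : Prop :=
  [/\ is_left_action actE, is_cocycle actE phi,
      forall g e, sE (actE g e) = actV (phi g e) (sE e) &
      forall g e, rE (actE g e) = actV g (rE e)].

Definition Xspace (E : Type) : topologicalType := disc (E * G)%type.

Definition X_lact (E : Type) (actE : G -> E -> E) (phi : G -> E -> G)
  : G -> Xspace E -> Xspace E :=
  fun h p => (actE h p.1, phi h p.1 * p.2).

Definition X_ract (E : Type) : Xspace E -> G -> Xspace E :=
  fun p g2 => (p.1, p.2 * g2).

Definition X_r (E : Type) (rE : E -> V) : Xspace E -> disc V :=
  fun p => rE p.1.

Definition X_s (E : Type) (sE : E -> V) : Xspace E -> disc V :=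
  fun p => actV (p.2)^-1 (sE p.1).

End Correspondences.

(* Main.v *)
Require Import Defs.
From HB Require Import structures.
From mathcomp Require Import all_boot all_order all_algebra generic_quotient.
From mathcomp Require Import all_classical all_reals topology.

Local Open Scope classical_set_scope.

Module Helpers.
Set Implicit Arguments. Unset Strict Implicit.

Section Aux.
Lemma all_open_cont (X Y : topologicalType) (f : X -> Y) :
  (forall A : set X, open A) -> continuous f.
Proof. by move=> H; apply/continuousP => A _; exact: H. Qed.

Lemma compact_fin (X : topologicalType) (A : set X) :
  (forall B : set X, open B) -> compact A -> finite_set A.
Proof.
move=> H cA; apply: contrapT => infA.
pose F := [set B : set X | finite_set (A `\` B)].
have PF : ProperFilter F.
  constructor.
    by rewrite /F /= setD0.
  constructor.
  - by rewrite /F /= setDT; exact: finite_set0.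
  - move=> B C fB fC; rewrite /F /=.
    apply: (sub_finite_set (B := (A `\` B) `|` (A `\` C))).
      move=> x [Ax]; rewrite /setI /= => /not_andP [nB|nC]; [left|right]; by split.
    by rewrite finite_setU.
  - move=> P Q PQ; rewrite /F /=; apply: sub_finite_set.
    by move=> x [Ax nQ]; split => // /PQ.
have FA : F A by rewrite /F /= setDv; exact: finite_set0.
have [x [Ax clx]] := cA F PF FA.
have FB : F (A `\` [set x]).
  rewrite /F /=; apply: (sub_finite_set (B := [set x])); last exact: finite_set1.
  by move=> y [Ay] /not_andP [//|/contrapT].
have nx : nbhs x [set x] by apply: open_nbhs_nbhs; split => //; exact: H.
by have [y [[_ nyx] yx]] := clx _ _ FB nx; apply: nyx.
Qed.

Lemma finite_inj T U (f : T -> U) (A : set T) (B : set U) :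
  injective f -> finite_set B -> (forall x, A x -> B (f x)) -> finite_set A.
Proof.
move=> inj fB AB; apply: (sub_finite_set (B := f @^-1` B)) => //.
by apply: finite_preimage => // x y _ _; exact: inj.
Qed.

Lemma singletons_open (X : topologicalType) :
  (forall x : X, open [set x]) -> forall A : set X, open A.
Proof.
move=> H A; have -> : A = \bigcup_(x in A) [set x].
  by apply/seteqP; split => [x Ax|x [y Ay ->]] //; exists x.
by apply: bigcup_open => x _; exact: H.
Qed.

Lemma cont_fst (X Y : topologicalType) : continuous (@fst X Y).
Proof. by move=> p; exact: cvg_fst. Qed.
Lemma cont_snd (X Y : topologicalType) : continuous (@snd X Y).
Proof. by move=> p; exact: cvg_snd. Qed.
End Aux.
Section Grp.
Variable G : DGroup.
Local Notation "x * y" := (gmul x y).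
Local Notation "x ^-1" := (ginv x).
Local Notation "1" := (@gone G).

Lemma g_idem (x : G) : x * x = x -> x = 1.
Proof.
move=> e; have := congr1 (gmul (x^-1)) e.
by rewrite gmulA gmulV gmul1.
Qed.

Lemma g_mulgV (x : G) : x * x^-1 = 1.
Proof.
apply: g_idem; rewrite -gmulA [x^-1 * (x * _)]gmulA gmulV gmul1 //.
Qed.

Lemma g_mulg1 (x : G) : x * 1 = x.
Proof. by rewrite -(gmulV x) gmulA g_mulgV gmul1. Qed.

Lemma g_mulKg (x y : G) : x^-1 * (x * y) = y.
Proof. by rewrite gmulA gmulV gmul1. Qed.

Lemma g_mulVKg (x y : G) : x * (x^-1 * y) = y.
Proof. by rewrite gmulA g_mulgV gmul1. Qed.

Lemma g_canl (x y z : G) : x * y = x * z -> y = z.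
Proof. by move=> e; rewrite -(g_mulKg x y) e g_mulKg. Qed.

Lemma g_invgK (x : G) : (x^-1)^-1 = x.
Proof. by apply: (@g_canl (x^-1)); rewrite g_mulgV gmulV. Qed.

Lemma g_invMg (x y : G) : (x * y)^-1 = y^-1 * x^-1.
Proof.
apply: (@g_canl (x * y)); rewrite g_mulgV -gmulA.
by rewrite [y * (y^-1 * _)]gmulA g_mulgV gmul1 g_mulgV.
Qed.

Lemma g_inv1 : (1 : G)^-1 = 1.
Proof. by rewrite -[X in X = _]g_mulg1 gmulV. Qed.

End Grp.

Section Part1.
Variables (G : DGroup) (V : Type) (actV : G -> V -> V).
Hypothesis HV : is_left_action actV.
Local Notation "x * y" := (gmul x y).
Local Notation "x ^-1" := (ginv x).
Local Notation "1" := (@gone G).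

Lemma Xopen (E : Type) (A : set (Xspace G E)) : open A.
Proof. exact: (@discrete_open (disc (E * G)%type)). Qed.

Lemma discV_open (A : set (disc V)) : open A.
Proof. exact: (@discrete_open (disc V)). Qed.

Lemma actVM g h v : actV (g * h) v = actV g (actV h v).
Proof. by case: HV => _ ->. Qed.
Lemma actV1 v : actV 1 v = v.
Proof. by case: HV => ->. Qed.

Lemma phi1 E actE (phi : G -> E -> G) : is_left_action actE ->
  is_cocycle actE phi -> forall e, phi 1 e = 1.
Proof.
move=> [a1 _] coc e; apply: g_idem.
by have := coc 1 1 e; rewrite gmul1 a1 => <-.
Qed.

Lemma part1 E actE (phi : G -> E -> G) rE sE :
  corr_data actV actE phi rE sE ->
  is_correspondence actV (X_lact actE phi) (@X_ract G E)
           (X_r rE) (X_s actV sE).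
Proof.
move=> [[a1 aM] coc sEq rEq].
have p1 := phi1 (conj a1 aM) coc.
split.
- split; last by move=> h [e x]; rewrite /X_r /X_lact /= rEq.
  split.
    by move=> [e x]; rewrite /X_lact /= a1 p1 gmul1.
  by move=> g h [e x]; rewrite /X_lact /= aM coc gmulA.
- split.
    split; first by move=> [e x]; rewrite /X_ract /= g_mulg1.
    by move=> [e x] g h; rewrite /X_ract /= gmulA.
  by move=> [e x] g; rewrite /X_s /X_ract /= g_invMg actVM.
- split.
  + by move=> h [e x] g; rewrite /X_lact /X_ract /= gmulA.
  + by [].
  + move=> h [e x]; rewrite /X_s /X_lact /= g_invMg actVM sEq.
    by rewrite -(actVM _ (phi h e)) gmulV actV1.
- by split; try move=> ?; apply: all_open_cont; exact: Xopen.
split.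
  move=> x; exists [set x]; split.
  - exact: Xopen.
  - by [].
  - exact: discV_open.
  - by move=> a b -> ->.
  - split; first by apply: continuous_subspaceT; apply: all_open_cont; exact: Xopen.
    by move=> *; exact: discV_open.
split.
  move=> [[e x] g] [[e' x'] g'] /= [-> e2 _ ex]; subst x'.
  by move: e2 => /g_canl ->.
move=> K cK.
set f := (fun p : (Xspace G E * disc G)%type => (X_ract p.1 p.2, p.1)).
have fK1 : finite_set (fst @` K).
  apply: compact_fin; first exact: Xopen.
  apply: continuous_compact => //; apply: continuous_subspaceT; exact: cont_fst.
have fK2 : finite_set (snd @` K).
  apply: compact_fin; first exact: Xopen.
  apply: continuous_compact => //; apply: continuous_subspaceT; exact: cont_snd.
have fK : finite_set K.
  apply: (sub_finite_set (B := (fst @` K) `*` (snd @` K))); last exact: finite_setX.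
  by move=> p Kp; split; exists p.
have fP : finite_set (f @^-1` K).
  apply: (@finite_inj _ _ f _ K) => //.
  move=> [[e x] g] [[e' x'] g'] /= [-> e2 _ ex]; subst x'.
  by move: e2 => /g_canl ->.
apply: finite_compact.
exact: fP.
Qed.
End Part1.

Section Part1b.
Local Open Scope quotient_scope.
Variables (G : DGroup) (V : Type) (actV : G -> V -> V) (E : Type) (rE : E -> V).
Local Notation "x * y" := (gmul x y).
Local Notation "x ^-1" := (ginv x).
Local Notation "1" := (@gone G).
Local Notation Q := (orbit_space (@X_ract G E)).

Lemma orbit_relE (x y : Xspace G E) : orbit_rel (@X_ract G E) x y <-> x.1 = y.1.
Proof.
split.
  move/asboolP => e.
  have : range (X_ract x) x.
    by exists 1 => //; case: x {e} => a b; rewrite /X_ract /= g_mulg1.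
  by rewrite e => -[g _ <-].
case: x y => [e x] [e' y] /= <-; apply/asboolP/seteqP; split.
  move=> _ [g _ <-]; exists (y^-1 * (x * g)) => //.
  by rewrite /X_ract /= g_mulVKg.
move=> _ [g _ <-]; exists (x^-1 * (y * g)) => //.
by rewrite /X_ract /= g_mulVKg.
Qed.

Lemma piE (x y : Xspace G E) : (\pi_Q x = \pi_Q y) <-> x.1 = y.1.
Proof.
rewrite -orbit_relE; split.
  by move/eqmodP.
by move=> h; apply/eqmodP.
Qed.

Lemma repr1 (x : Xspace G E) : (repr (\pi_Q x)).1 = x.1.
Proof. by apply/piE; rewrite reprK. Qed.

Lemma Qopen (A : set Q) : open A.
Proof. exact: Xopen. Qed.
End Part1b.

Section Part1c.
Local Open Scope quotient_scope.
Variables (G : DGroup) (V : Type) (actV : G -> V -> V) (E : Type) (rE : E -> V).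
Local Notation "x * y" := (gmul x y).
Local Notation "x ^-1" := (ginv x).
Local Notation "1" := (@gone G).
Local Notation Q := (orbit_space (@X_ract G E)).
Local Notation AS := (@anchor_star G V (Xspace G E) (@X_ract G E) (X_r rE)).

Lemma astar_pi (x : Xspace G E) :
  AS (\pi_Q x) = rE x.1.
Proof. by rewrite /anchor_star /X_r repr1. Qed.

Lemma repr_inj : injective (fun q : Q => (repr q).1).
Proof.
move=> q q' /= e; rewrite -[q]reprK -[q']reprK; exact/piE.
Qed.

Lemma part_proper :
  proper_corr (@X_ract G E) (X_r rE) <->
           (forall v : V, finite_set (rE @^-1` [set v])).
Proof.
split.
  move=> H v.
  have cK : compact ([set v] : set (disc V)) by apply: finite_compact; exact: finite_set1.
  have := compact_fin (fun A => @Qopen G E A) (H _ cK) => fP.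
  apply: (@finite_inj _ _ (fun e => \pi_Q ((e, 1) : Xspace G E)) _ _ _ fP).
    by move=> e e' /piE.
  by move=> e /= <-; rewrite /preimage /= astar_pi.
move=> H K cK.
have fK := compact_fin (fun A => @discV_open V A) cK.
apply: finite_compact.
apply: (@finite_inj _ _ (fun q : Q => (repr q).1) _ (\bigcup_(v in K) (rE @^-1` [set v]))).
- exact: repr_inj.
- by apply: bigcup_finite => // v _; exact: H.
- by move=> q Kq; exists (AS q).
Qed.

Lemma part_tight :
  tight_corr (@X_ract G E) (X_r rE) <-> bijective rE.
Proof.
split.
  move=> [_ [g [c1 c2 _]]].
  exists (fun v => (repr (g v)).1).
    move=> e; rewrite -(astar_pi ((e, 1) : Xspace G E)) c1.
    by rewrite repr1.
  by move=> v; have := c2 v; rewrite /anchor_star /X_r.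
move=> [ri c1 c2]; split.
  by apply: all_open_cont; exact: Qopen.
exists (fun v => \pi_Q ((ri v, 1) : Xspace G E)); split.
- move=> q; rewrite -[RHS]reprK; apply/piE => /=.
  by rewrite /anchor_star /X_r c1.
- by move=> v; rewrite astar_pi /= c2.
- by apply: all_open_cont; exact: discV_open.
Qed.
End Part1c.

Section Part3.
Variables (G : DGroup) (V : Type) (actV : G -> V -> V).
Hypothesis HV : is_left_action actV.
Local Notation "x * y" := (gmul x y).
Local Notation "x ^-1" := (ginv x).
Local Notation "1" := (@gone G).

Lemma part3 (E : Type) (actE : G -> E -> E) (phi : G -> E -> G) (rE sE : E -> V)
          (E' : Type) (actE' : G -> E' -> E') (phi' : G -> E' -> G)
          (rE' sE' : E' -> V) :
     corr_data actV actE phi rE sE ->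
     corr_data actV actE' phi' rE' sE' ->
     (corr_iso (X_lact actE phi) (@X_ract G E) (X_r rE) (X_s actV sE)
        (X_lact actE' phi') (@X_ract G E') (X_r rE') (X_s actV sE') <->
      exists (f : E -> E') (psi : E -> G),
        [/\ bijective f,
            forall h e, f (actE h e) = actE' h (f e),
            forall e, rE' (f e) = rE e,
            forall h e, phi' h (f e) =
                        gmul (ginv (psi (actE h e))) (gmul (phi h e) (psi e)) &
            forall e, sE' (f e) = actV (ginv (psi e)) (sE e)]).
Proof.
move=> D1 D2; split.
  move=> [F [[_ [Fi [c1 c2 _]]] Fl Fr Frr Fs]].
  pose f e := (F ((e, 1) : Xspace G E)).1.
  pose p e := (F ((e, 1) : Xspace G E)).2.
  have FE : forall e g, F ((e, g) : Xspace G E) = (f e, p e * g).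
    move=> e g; have := Fr ((e, 1) : Xspace G E) g.
    rewrite /X_ract /= gmul1 => ->.
    by rewrite /f /p; case: (F _).
  exists f, (fun e => (p e)^-1); split.
  - exists (fun e' => (Fi ((e', 1) : Xspace G E')).1).
      move=> e; have : (f e, 1) = F ((e, (p e)^-1) : Xspace G E).
        by rewrite FE g_mulgV.
      by move=> ->; rewrite c1.
    move=> e'; have := c2 ((e', 1) : Xspace G E').
    case: (Fi _) => a b; rewrite FE => -[] //.
  - move=> h e; have := Fl h ((e, 1) : Xspace G E).
    by rewrite /X_lact /= FE FE => -[].
  - by move=> e; have := Frr ((e, 1) : Xspace G E); rewrite /X_r /= FE.
  - move=> h e; have := Fl h ((e, 1) : Xspace G E).
    rewrite /X_lact /= FE FE => -[_ e2].
    rewrite !g_mulg1 in e2; rewrite g_invgK.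
    by rewrite gmulA e2 -gmulA g_mulgV g_mulg1.
  - move=> e; have := Fs ((e, 1) : Xspace G E); rewrite /X_s /= FE g_mulg1 g_inv1 (actV1 HV).
    rewrite g_invgK => <-.
    by rewrite -(actVM HV) g_mulgV (actV1 HV).
move=> [f [psi [[fi c1 c2] fl fr fphi fs]]].
exists (fun x : Xspace G E => ((f x.1, (psi x.1)^-1 * x.2) : Xspace G E')); split.
- split; first by apply: all_open_cont; exact: Xopen.
  exists (fun y : Xspace G E' => ((fi y.1, psi (fi y.1) * y.2) : Xspace G E)); split.
  + by move=> [e g] /=; rewrite c1 g_mulVKg.
  + by move=> [e g] /=; rewrite c2 g_mulKg.
  + by apply: all_open_cont; exact: Xopen.
- move=> h [e g]; rewrite /X_lact /= fl fphi.
  by rewrite -!gmulA g_mulVKg.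
- by move=> [e g] g2; rewrite /X_ract /= gmulA.
- by move=> [e g]; rewrite /X_r /= fr.
- move=> [e g]; rewrite /X_s /= fs g_invMg g_invgK !(actVM HV).
  by rewrite -(actVM HV (psi e)) g_mulgV actV1.
Qed.
End Part3.

Section Part2.
Local Open Scope quotient_scope.
Variables (G : DGroup) (V : Type) (actV : G -> V -> V).
Hypothesis HV : is_left_action actV.
Local Notation "x * y" := (gmul x y).
Local Notation "x ^-1" := (ginv x).
Local Notation "1" := (@gone G).
Variables (X : topologicalType) (lact : G -> X -> X) (ract : X -> G -> X)
          (r s : X -> disc V).
Hypothesis HC : is_correspondence actV lact ract r s.

Local Notation E := (orbit_space ract).

Lemma l1 x : lact 1 x = x. Proof. by case: HC => [[[-> _] _] _ _ _ _]. Qed.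
Lemma lM g h x : lact (g * h) x = lact g (lact h x).
Proof. by case: HC => [[[_ ->] _] _ _ _ _]. Qed.
Lemma rl h x : r (lact h x) = actV h (r x).
Proof. by case: HC => [[_ ->] _ _ _ _]. Qed.
Lemma r1 x : ract x 1 = x. Proof. by case: HC => [_ [[-> _] _] _ _ _]. Qed.
Lemma rM x g h : ract x (g * h) = ract (ract x g) h.
Proof. by case: HC => [_ [[_ ->] _] _ _ _]. Qed.
Lemma sr x g : s (ract x g) = actV g^-1 (s x).
Proof. by case: HC => [_ [_ ->] _ _ _]. Qed.
Lemma lr h x g : lact h (ract x g) = ract (lact h x) g.
Proof. by case: HC => [_ _ [-> _ _] _ _]. Qed.
Lemma rr x g : r (ract x g) = r x.
Proof. by case: HC => [_ _ [_ -> _] _ _]. Qed.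
Lemma sl h x : s (lact h x) = s x.
Proof. by case: HC => [_ _ [_ _ ->] _ _]. Qed.
Lemma free x g g' : ract x g = ract x g' -> g = g'.
Proof.
case: HC => [_ _ _ _ [_ [inj _]]] e.
by have := inj ((x, g) : (X * disc G)%type) (x, g'); rewrite /= e => /(_ erefl) [].
Qed.

Lemma Xall (A : set X) : open A.
Proof.
apply: singletons_open => x.
case: HC => [_ _ _ [_ cs _ _] [lh _]].
have [U [oU Ux _ injU _]] := lh x.
have -> : [set x] = U `&` s @^-1` [set s x].
  apply/seteqP; split=> [y -> //|y [Uy /= sy]].
  exact: injU.
apply: openI => //.
by move/continuousP: cs; apply; exact: discV_open.
Qed.

Lemma orbit_self x : range (ract x) x.
Proof. by exists 1 => //; rewrite r1. Qed.

Lemma pi_ract x g : \pi_E (ract x g) = \pi_E x.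
Proof.
apply/eqmodP/asboolP/seteqP; split => _ [k _ <-].
  by exists (g * k) => //; rewrite rM.
by exists (g^-1 * k) => //; rewrite -rM gmulA g_mulgV gmul1.
Qed.

Lemma ex_gamma x : exists g, ract (repr (\pi_E x)) g = x.
Proof.
have /asboolP e : orbit_rel ract (repr (\pi_E x)) x.
  by apply: (introT (eqmodP (orbit_equiv ract) _ _)); rewrite reprK.
have := orbit_self x; rewrite -e.
by case=> g _ eg; exists g.
Qed.

Definition gam x : G := projT1 (cid (ex_gamma x)).
Lemma gamP x : ract (repr (\pi_E x)) (gam x) = x.
Proof. exact: (projT2 (cid (ex_gamma x))). Qed.
Lemma gam_uniq x k : ract (repr (\pi_E x)) k = x -> gam x = k.
Proof. by move=> e; apply: (@free (repr (\pi_E x))); rewrite gamP e. Qed.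

Lemma Lh h x : lact h x = ract (lact h (repr (\pi_E x))) (gam x).
Proof. by rewrite -lr gamP. Qed.

Lemma pi_lact h x : \pi_E (lact h x) = \pi_E (lact h (repr (\pi_E x))).
Proof. by rewrite {1}Lh pi_ract. Qed.

Definition actE h (q : E) : E := \pi_E (lact h (repr q)).
Definition phiE h (q : E) : G := gam (lact h (repr q)).
Definition rEE (q : E) : V := r (repr q).
Definition sEE (q : E) : V := s (repr q).

Lemma dataE : corr_data actV actE phiE rEE sEE.
Proof.
split.
- split; first by move=> q; rewrite /actE l1 reprK.
  move=> g h q; rewrite /actE lM; exact: pi_lact.
- move=> g h q; rewrite /phiE /actE; apply: gam_uniq.
  set y := lact h (repr q).
  have -> : \pi_E (lact (g * h) (repr q)) = \pi_E (lact g (repr (\pi_E y))).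
    by rewrite lM pi_lact.
  by rewrite rM gamP -lr gamP lM.
- move=> g q; rewrite /sEE /actE /phiE.
  set y := lact g (repr q).
  have e : s y = actV (gam y)^-1 (s (repr (\pi_E y))) by rewrite -sr gamP.
  by rewrite -(sl g (repr q)) -/y e -(actVM HV) g_mulgV (actV1 HV).
- move=> g q; rewrite /rEE /actE.
  by rewrite -rl -[in RHS](gamP (lact g (repr q))) rr.
Qed.

Lemma isoE : corr_iso lact ract r s
         (X_lact actE phiE) (@X_ract G E) (X_r rEE) (X_s actV sEE).
Proof.
exists (fun x => ((\pi_E x, gam x) : Xspace G E)); split.
- split; first by apply: all_open_cont; exact: Xall.
  exists (fun p : Xspace G E => ract (repr p.1) p.2); split.
  + by move=> x /=; rewrite gamP.
  + move=> [q g] /=; rewrite pi_ract reprK; congr pair.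
    by apply: gam_uniq; rewrite pi_ract reprK.
  + by apply: all_open_cont; exact: Xopen.
- move=> h x; rewrite /X_lact /actE /phiE /=; congr pair.
    exact: pi_lact.
  apply: gam_uniq; rewrite pi_lact rM gamP.
  by rewrite -Lh.
- move=> x g; rewrite /X_ract /=; rewrite pi_ract; congr pair.
  by apply: gam_uniq; rewrite pi_ract rM gamP.
- by move=> x; rewrite /X_r /rEE /= -{2}(gamP x) rr.
- by move=> x; rewrite /X_s /sEE /= -[in RHS](gamP x) sr.
Qed.
End Part2.

End Helpers.

Theorem proposition4p3 (G : DGroup) (V : Type) (actV : G -> V -> V)
    (HV : is_left_action actV) :
  (* (1) the construction gives a groupoid correspondence, and
     (4) properness / tightness criteria *)
  (forall (E : Type) (actE : G -> E -> E) (phi : G -> E -> G) (rE sE : E -> V),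
     corr_data actV actE phi rE sE ->
     [/\ is_correspondence actV (X_lact actE phi) (@X_ract G E)
           (X_r rE) (X_s actV sE),
         proper_corr (@X_ract G E) (X_r rE) <->
           (forall v : V, finite_set (rE @^-1` [set v])) &
         tight_corr (@X_ract G E) (X_r rE) <-> bijective rE]) /\
  (* (2) every correspondence is isomorphic to one of this form *)
  (forall (X : topologicalType) (lact : G -> X -> X) (ract : X -> G -> X)
          (r s : X -> disc V),
     is_correspondence actV lact ract r s ->
     exists (E : Type) (actE : G -> E -> E) (phi : G -> E -> G) (rE sE : E -> V),
       corr_data actV actE phi rE sE /\
       corr_iso lact ract r s
         (X_lact actE phi) (@X_ract G E) (X_r rE) (X_s actV sE)) /\
  (* (3) uniqueness of (E, r, s) up to isomorphism and of phi up to the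
     action of maps psi : E -> G *)
  (forall (E : Type) (actE : G -> E -> E) (phi : G -> E -> G) (rE sE : E -> V)
          (E' : Type) (actE' : G -> E' -> E') (phi' : G -> E' -> G)
          (rE' sE' : E' -> V),
     corr_data actV actE phi rE sE ->
     corr_data actV actE' phi' rE' sE' ->
     (corr_iso (X_lact actE phi) (@X_ract G E) (X_r rE) (X_s actV sE)
        (X_lact actE' phi') (@X_ract G E') (X_r rE') (X_s actV sE') <->
      exists (f : E -> E') (psi : E -> G),
        [/\ bijective f,
            forall h e, f (actE h e) = actE' h (f e),
            forall e, rE' (f e) = rE e,
            forall h e, phi' h (f e) =
                        gmul (ginv (psi (actE h e))) (gmul (phi h e) (psi e)) &
            forall e, sE' (f e) = actV (ginv (psi e)) (sE e)])).
Proof.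
split.
  move=> E actE phi rE sE D; split.
  - exact: Helpers.part1.
  - exact: Helpers.part_proper.
  - exact: Helpers.part_tight.
split.
  move=> X lact ract r s HC.
  exists (orbit_space ract), (@Helpers.actE G X lact ract), (Helpers.phiE HC),
    (@Helpers.rEE G V X ract r), (@Helpers.sEE G V X ract s); split.
  - exact: Helpers.dataE.
  - exact: Helpers.isoE.
move=> *; exact: Helpers.part3.
Qed.
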